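(* Let $(A,B)$ be a Katsura pair with $B\in M_N(\{0,1\})$ and KEP-action $(G_B,E_A)$. For $\mu,\nu\in E_A^{-\infty}$, $\mu\sim_e\nu$ if and only if either $\mu=\nu$, or there is $K<0$ such that $s(\mu_k)=s(\nu_k)=:v_k$ for all $k\le K$ and $B_{v_{k-1},v_k}=1$ for all $k\le K$, and, if $K<-1$, $B_{v_K,v_{K+1}}=0$ and $\mu_{K+1}\cdots\mu_{-1}=\nu_{K+1}\cdots\nu_{-1}$.
   Context: Katsura pair: $N\in\mathbb{N}$, $A\in M_N(\mathbb{N})$ (nonnegative integers), $B\in M_N(\mathbb{Z})$ with $A_{ij}=0\Rightarrow B_{ij}=0$. Graph $E_A$: vertices $\{1,\dots,N\}$, edges $e_{i,j,m}$ ($0\le m<A_{ij}$), $r=i$, $s=j$. $E_A^{-\infty}$ is the set of left-infinite paths $\mu=\cdots\mu_{-2}\mu_{-1}$ with $s(\mu_k)=r(\mu_{k+1})$ (so $r(\mu_k)=s(\mu_{k-1})$). The group bundle $\mathbb{Z}\times E_A^0$ (elements $a_i^k$) acts by $a_i^k\cdot e_{i,j,m}=e_{i,j,\hat m}$, $a_i^k|_{e_{i,j,m}}=a_j^{\hat k}$ where $kB_{ij}+m=\hat kA_{ij}+\hat m$, $0\le\hat m<A_{ij}$, extended to finite paths by $g\cdot(e\nu)=(g\cdot e)(g|_e\cdot\nu)$; $G_B$ is the quotient by elements acting trivially, and $(G_B,E_A)$ is the KEP-action. $\mu\sim_e\nu$ iff there is $(g_n)_{n<0}\subseteq G_B$ with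 $d(g_n)=r(\mu_n)$ and $g_n\cdot\mu_n\cdots\mu_{-1}=\nu_n\cdots\nu_{-1}$ for all $n<0$. *)

(* Defs.v *)
From mathcomp Require Import all_boot all_order all_algebra.
Set Implicit Arguments. Unset Strict Implicit. Unset Printing Implicit Defensive.
Import Order.TTheory GRing.Theory Num.Theory.
Local Open Scope ring_scope.

(* Vertices of E_A are 'I_N (0-based version of {1,..,N}).
   An edge e_{i,j,m} is encoded as (Edge i j m), with r = i, s = j;
   it is a genuine edge of E_A iff m < A i j. *)
Record edge (N : nat) := Edge { er : 'I_N; es : 'I_N; em : nat }.
Arguments Edge {N}.

Definition valid_edge (N : nat) (A : 'M[nat]_N) (e : edge N) : Prop :=
  (em e < A (er e) (es e))%N.

(* A left-infinite path mu = ... mu_{-2} mu_{-1} is encoded as a function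
   mu : nat -> edge N with  mu_{k} = mu (-k-1)  for k < 0. *)
Definition at_ (N : nat) (mu : nat -> edge N) (k : int) : edge N :=
  mu (`|k|.-1)%N.

Definition is_lpath (N : nat) (A : 'M[nat]_N) (mu : nat -> edge N) : Prop :=
  forall k : int, k < 0 ->
    valid_edge A (at_ mu k) /\ (k < -1 -> es (at_ mu k) = er (at_ mu (k + 1))).

Definition seg (N : nat) (mu : nat -> edge N) (n : int) : seq (edge N) :=
  rev (mkseq mu `|n|).

(* Action of a_i^k (i = r(e)) on the edge e = e_{i,j,m}:
   returns (a_i^k . e, k') where a_i^k|_e = a_j^{k'}, with
   k B_ij + m = k' A_ij + m',  0 <= m' < A_ij. *)
Definition act_edge (N : nat) (A : 'M[nat]_N) (B : 'M[int]_N) (k : int)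
    (e : edge N) : edge N * int :=
  let x := k * B (er e) (es e) + (em e)%:Z in
  let a := (A (er e) (es e))%:Z in
  (Edge (er e) (es e) `|(x %% a)%Z|%N, (x %/ a)%Z).

(* Action of a_{r(p)}^k on a finite path p: g.(e p') = (g.e)(g|_e . p'). *)
Fixpoint act_path (N : nat) (A : 'M[nat]_N) (B : 'M[int]_N) (k : int)
    (p : seq (edge N)) : seq (edge N) :=
  match p with
  | [::] => [::]
  | e :: p' => let ek := act_edge A B k e in ek.1 :: act_path A B ek.2 p'
  end.

(* mu ~_e nu : for every n < 0 there is g_n in G_B with d(g_n) = r(mu_n)
   and g_n . mu_n...mu_{-1} = nu_n...nu_{-1}.  An element of G_B with domain
   r(mu_n) is the class of some a_{r(mu_n)}^k, k in Z, and the action of a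
   class is that of any representative. *)
Definition ext_equiv (N : nat) (A : 'M[nat]_N) (B : 'M[int]_N)
    (mu nu : nat -> edge N) : Prop :=
  forall n : int, n < 0 -> exists k : int, act_path A B k (seg mu n) = seg nu n.

(* Main.v *)
Require Import Defs.
From mathcomp Require Import all_boot all_order all_algebra.
From mathcomp Require Import zify.
From Stdlib Require Import Classical FunctionalExtensionality.
Import Order.TTheory GRing.Theory Num.Theory.
Set Implicit Arguments. Unset Strict Implicit.
Local Open Scope ring_scope.

Section Aux.
Variables (N : nat) (A : 'M[nat]_N) (B : 'M[int]_N).

Definition validb (e : edge N) : bool := (em e < A (er e) (es e))%N.

Lemma act_edge_B0 k e : validb e -> B (er e) (es e) = 0 -> act_edge A B k e = (e, 0).
Proof.
move=> hv hb; rewrite /act_edge hb mulr0 add0r.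
have h0 : 0 <= (em e)%:Z < (A (er e) (es e))%:Z by move: hv; rewrite /validb; lia.
rewrite modz_small // divz_small; last by move: hv; rewrite /validb /=; lia.
by case: e hv hb h0.
Qed.

Lemma act_path0 p : all validb p -> act_path A B 0 p = p.
Proof.
elim: p => //= e p IH /andP[hv hp].
have h0 : 0 <= (em e)%:Z < (A (er e) (es e))%:Z by move: hv; rewrite /validb; lia.
rewrite /act_edge mul0r add0r modz_small // divz_small /=; last by move: hv; rewrite /validb /=; lia.
by rewrite IH //; case: e hv h0.
Qed.

Lemma act_path_cat k p1 p2 : exists k', act_path A B k (p1 ++ p2) = act_path A B k p1 ++ act_path A B k' p2.
Proof.
elim: p1 k => [|e p IH] k /=; first by exists k.
have [k' ->] := IH (act_edge A B k e).2; by exists k'.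
Qed.

Lemma odometer (mu nu : nat -> edge N) (s : seq nat) :
  (forall i, i \in s -> [/\ er (mu i) = er (nu i), es (mu i) = es (nu i),
      validb (mu i), validb (nu i) & B (er (mu i)) (es (mu i)) = 1]) ->
  exists k, act_path A B k (map mu s) = map nu s.
Proof.
elim: s => [|i s IH] H /=; first by exists 0.
have [k' hk'] : exists k', act_path A B k' (map mu s) = map nu s.
  by apply: IH => j hj; apply: H; rewrite inE hj orbT.
have [hr hs hv1 hv2 hb] := H i (mem_head _ _).
set a : int := (A (er (mu i)) (es (mu i)))%:Z.
have ha : 0 < a by rewrite /a ltz_nat; move: hv1; rewrite /validb; lia.
have h0 : 0 <= (em (nu i))%:Z < a.
  by rewrite lez_nat /a ltz_nat hr hs; move: hv2; rewrite /validb; lia.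
exists (k' * a + (em (nu i))%:Z - (em (mu i))%:Z).
rewrite /act_edge hb mulr1 -/a.
have -> : k' * a + (em (nu i))%:Z - (em (mu i))%:Z + (em (mu i))%:Z = k' * a + (em (nu i))%:Z.
  by rewrite subrK.
rewrite divzMDl ?gt_eqF // divz_small ?addr0; last by move: h0; rewrite /a /=; lia.
rewrite modzMDl modz_small // hk'.
move: h0 => /andP[h1 _].
have -> : `|(em (nu i))%:Z|%N = em (nu i) by [].
by rewrite hr hs; case: (nu i).
Qed.

End Aux.

Lemma act_path_cons N (A : 'M[nat]_N) B k (e : edge N) p : act_path A B k (e :: p) = (act_edge A B k e).1 :: act_path A B (act_edge A B k e).2 p.
Proof. by []. Qed.

Definition sg (N : nat) (mu : nat -> edge N) (L : nat) := rev (mkseq mu L).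

Lemma sgS N (mu : nat -> edge N) L : sg mu L.+1 = mu L :: sg mu L.
Proof. by rewrite /sg /mkseq -addn1 iotaD map_cat rev_cat /=. Qed.

Lemma sg_eq N (mu nu : nat -> edge N) L :
  sg mu L = sg nu L <-> (forall i, (i < L)%N -> mu i = nu i).
Proof.
elim: L => [|L IH]; first by split => // _ i.
rewrite !sgS; split.
  case=> h1 /IH h2 i; rewrite ltnS leq_eqVlt => /orP[/eqP -> //|]; exact: h2.
move=> H; rewrite H // (proj2 IH) // => i hi; apply: H; exact: ltnW.
Qed.

Lemma sg_all N A (mu : nat -> edge N) L : (forall i, validb A (mu i)) -> all (validb A) (sg mu L).
Proof. move=> H; elim: L => // L IH; by rewrite sgS /= H IH. Qed.

Lemma sg_split N (mu : nat -> edge N) j d : sg mu (j + d) = map mu (rev (iota j d)) ++ sg mu j.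
Proof.
elim: d => [|d IH]; first by rewrite addn0.
by rewrite addnS sgS IH -addn1 iotaD rev_cat /=.
Qed.

Lemma negz_add1 i : Negz i.+1 + 1 = Negz i. Proof. lia. Qed.
Lemma negz_sub1 i : Negz i - 1 = Negz i.+1. Proof. lia. Qed.
Lemma negz_le i j : (Negz i <= Negz j) = (j <= i)%N. Proof. apply/idP/idP; lia. Qed.
Lemma negz_of (k : int) : k < 0 -> exists i, k = Negz i. Proof. case: k => n //; eauto. Qed.
Lemma negz_le_of (k : int) j : k <= Negz j -> exists i, k = Negz i.
Proof. move=> h; apply: negz_of; lia. Qed.

Theorem proposition6p2 (N : nat) (A : 'M[nat]_N) (B : 'M[int]_N)
    (hAB : forall i j, A i j = 0%N -> B i j = 0)
    (hB01 : forall i j, B i j = 0 \/ B i j = 1)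
    (mu nu : nat -> edge N) (hmu : is_lpath A mu) (hnu : is_lpath A nu) :
  ext_equiv A B mu nu <->
  (mu = nu \/
   exists K : int, K < 0 /\
     (forall k : int, k <= K -> es (at_ mu k) = es (at_ nu k)) /\
     (forall k : int, k <= K -> B (es (at_ mu (k - 1))) (es (at_ mu k)) = 1) /\
     (K < -1 ->
        B (es (at_ mu K)) (es (at_ mu (K + 1))) = 0 /\
        seg mu (K + 1) = seg nu (K + 1))).
Proof.
have hv (f : nat -> edge N) : is_lpath A f -> forall i, validb A (f i).
  by move=> hf i; exact: (hf (Negz i) erefl).1.
have hl (f : nat -> edge N) : is_lpath A f -> forall i, es (f i.+1) = er (f i).
  move=> hf i; have := (hf (Negz i.+1) erefl).2 erefl; by rewrite negz_add1.
have hvm := hv _ hmu; have hvn := hv _ hnu.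
have hlm := hl _ hmu; have hln := hl _ hnu.
split.
- move=> H.
  have HV i : er (mu i) = er (nu i) /\ es (mu i) = es (nu i).
    have [k hk] := H (Negz i) erefl.
    move: hk; rewrite /seg /= -/(sg mu i.+1) -/(sg nu i.+1) !sgS /= => -[<- _].
    by [].
  have HZ i : B (er (mu i)) (es (mu i)) = 0 -> forall l, (l <= i)%N -> mu l = nu l.
    move=> hb; have [k hk] := H (Negz i) erefl.
    move: hk; rewrite /seg /= -/(sg mu i.+1) -/(sg nu i.+1) !sgS.
    rewrite act_path_cons act_edge_B0 //= act_path0 ?sg_all // => -[h1 h2] l.
    rewrite leq_eqVlt => /orP[/eqP -> //|]; by move=> hl'; apply: (proj1 (sg_eq mu nu i) h2).
  have HB1 i : B (er (mu i)) (es (mu i)) != 0 -> B (es (at_ mu (Negz i - 1))) (es (at_ mu (Negz i))) = 1.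
    rewrite negz_sub1 /= hlm; by case: (hB01 (er (mu i)) (es (mu i))) => ->.
  case: (classic (exists i0, forall i, (i0 <= i)%N -> B (er (mu i)) (es (mu i)) != 0)); last first.
    move=> hn; left; apply: functional_extensionality => l.
    apply: NNPP => hne; apply: hn; exists l.+1 => i hi; apply/eqP => hb.
    by apply: hne; apply: (HZ i hb); apply: ltnW.
  move=> [i0 hi0]; right.
  case: (classic (exists i, B (er (mu i)) (es (mu i)) == 0)) => [hex|hnex].
    have hbd : forall i, B (er (mu i)) (es (mu i)) == 0 -> (i <= i0)%N.
      move=> i hb; case: (leqP i0 i) => [hle|/ltnW //]; by rewrite (negPf (hi0 _ hle)) in hb.
    case: (ex_maxnP hex hbd) => jm /eqP hjm hmax.
    exists (Negz jm.+1); split => //; split.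
      move=> k hk; have [i ->] := negz_le_of hk; exact: (HV i).2.
    split.
      move=> k hk; have [i ei] := negz_le_of hk; subst k.
      apply: HB1; apply/negP => hb; move: (hmax i hb) hk; rewrite negz_le; lia.
    move=> _; rewrite negz_add1 /= hlm hjm; split => //.
    rewrite /seg /=; apply/sg_eq => l hl'; apply: (HZ jm hjm); by rewrite -ltnS.
  exists (Negz 0); split => //; split.
    move=> k hk; have [i ->] := negz_le_of hk; exact: (HV i).2.
  split => //.
  move=> k hk; have [i ei] := negz_le_of hk; subst k.
  apply: HB1; apply/negP => hb; apply: hnex; by exists i.
- case=> [<-|[K [hK [h1 [h2 h3]]]]] n hn; have [l ->] := negz_of hn.
    by exists 0; rewrite act_path0 // sg_all.
  rewrite /seg /= -/(sg mu l.+1) -/(sg nu l.+1).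
  have [j ej] := negz_of hK; subst K.
  have hes i : (j <= i)%N -> es (mu i) = es (nu i).
    by move=> hi; have := h1 (Negz i); rewrite negz_le; apply.
  have hb1 i : (j <= i)%N -> B (er (mu i)) (es (mu i)) = 1.
    move=> hi; have := h2 (Negz i); rewrite negz_le negz_sub1 /= hlm; apply => //.
  case: (ltnP l j) => hlj.
    have [_ hs] : _ /\ _ := h3 (ltac:(lia)).
    have hs' : sg mu j = sg nu j.
      by move: hs; rewrite -(prednK (leq_ltn_trans (leq0n l) hlj)) negz_add1.
    have hmn : forall i, (i < l.+1)%N -> mu i = nu i.
      move=> i hi; apply: (proj1 (sg_eq _ _ _) hs'); exact: leq_trans hi hlj.
    by exists 0; rewrite act_path0 ?sg_all //; apply/sg_eq.
  have -> : l.+1 = (j + (l.+1 - j))%N by lia.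
  rewrite !sg_split.
  have [k hk] : exists k, act_path A B k (map mu (rev (iota j (l.+1 - j)))) = map nu (rev (iota j (l.+1 - j))).
    apply: odometer => i; rewrite mem_rev mem_iota => /andP[hi _].
    split; [|exact: hes|exact: hvm|exact: hvn|exact: hb1].
    by rewrite -hlm -hln hes //; apply: leqW.
  exists k; have [k' ->] := act_path_cat A B k (map mu (rev (iota j (l.+1 - j)))) (sg mu j).
  rewrite hk; congr (_ ++ _).
  case: j hK h1 h2 h3 hes hb1 hlj {hk} => [|j] hK h1 h2 h3 hes hb1 hlj; first by [].
  have [hb0 hs] : _ /\ _ := h3 (ltac:(lia)).
  move: hb0 hs; rewrite negz_add1 /= hlm => hb0 hs.
  by rewrite sgS act_path_cons act_edge_B0 //= act_path0 ?sg_all // -sgS.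
Qed.
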